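(* Let $\mathcal{H}$ be a real Hilbert space, $N\ge2$, $A_1:\mathcal{H}\rightrightarrows\mathcal{H}$ maximally monotone, and for $\delta,\gamma\in\mathbb{R}_{++}$ define $\tilde{\mathcal{Q}}_{\delta\leftarrow\gamma}=(\tilde{\mathcal{Q}}^1_{\delta\leftarrow\gamma},\dots,\tilde{\mathcal{Q}}^{N-1}_{\delta\leftarrow\gamma}):\mathcal{H}^{N-1}\to\mathcal{H}^{N-1}$ by $\tilde{\mathcal{Q}}^1_{\delta\leftarrow\gamma}\mathbf{x}=\frac{\delta}{\gamma}x^1+(1-\frac{\delta}{\gamma})J_{\gamma A_1}x^1$ and $\tilde{\mathcal{Q}}^i_{\delta\leftarrow\gamma}\mathbf{x}=\frac{\delta}{\gamma}(x^i-x^1)+\tilde{\mathcal{Q}}^1_{\delta\leftarrow\gamma}\mathbf{x}$ for $i=2,\dots,N-1$, where $\mathbf{x}=(x^1,\dots,x^{N-1})$. Then $\tilde{\mathcal{Q}}_{\delta\leftarrow\gamma}$ is Lipschitz continuous (with respect to the product norm on $\mathcal{H}^{N-1}$) with constant $$\check{\mathcal{L}}_{\delta\leftarrow\gamma}=\frac{\sqrt{\delta}}{\sqrt{\gamma}}+\frac{\sqrt{|\gamma-\delta|}}{\sqrt{\gamma}}\max\Big\{\sqrt{N-1},\ \sqrt{2N}\sqrt{\tfrac{\delta}{\gamma}}\Big\}.$$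
   Context: $J_{A}=(\mathrm{Id}+A)^{-1}$ is the resolvent; the norm on $\mathcal{H}^{N-1}$ is $\|\mathbf{x}\|^2=\sum_{i=1}^{N-1}\|x^i\|^2$. *)

(* Defs.v *)
From HB Require Import structures.
From mathcomp Require Import all_boot all_order all_algebra.
From mathcomp Require Import all_classical all_reals all_analysis.
Set Implicit Arguments. Unset Strict Implicit. Unset Printing Implicit Defensive.
Import Order.TTheory GRing.Theory Num.Theory.
Import numFieldNormedType.Exports.
Local Open Scope classical_set_scope.
Local Open Scope ring_scope.

(* A real Hilbert space is a complete normed space H whose norm comes from an
   inner product [ip]: symmetric, linear in the first argument, ip x x = |x|^2. *)
Definition is_inner_product (R : realType) (H : normedModType R)
  (ip : H -> H -> R) : Prop :=
  [/\ (forall x y, ip x y = ip y x),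
      (forall (a : R) x y z, ip (a *: x + y) z = a * ip x z + ip y z)
    & (forall x, ip x x = `|x| ^+ 2)].

Definition monotone_op (R : realType) (H : normedModType R)
  (ip : H -> H -> R) (A : H -> set H) : Prop :=
  forall x y u v, A x u -> A y v -> 0 <= ip (x - y) (u - v).

Definition maximally_monotone (R : realType) (H : normedModType R)
  (ip : H -> H -> R) (A : H -> set H) : Prop :=
  monotone_op ip A /\
  forall B : H -> set H, monotone_op ip B ->
    (forall x u, A x u -> B x u) -> forall x u, B x u -> A x u.

(* Resolvent J_{gamma A} = (Id + gamma A)^{-1}, as a (chosen) function:
   J x is a point p with x \in p + gamma A p (unique when A is maximally monotone
   and gamma > 0, by Minty's theorem). *)
Definition resolvent (R : realType) (H : completeNormedModType R)
  (gamma : R) (A : H -> set H) (x : H) : H :=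
  xget 0 [set p | exists2 u, A p u & x = p + gamma *: u].

(* The first index (x^1) of 'I_n, obtained from any inhabitant. *)
Definition ord_first (n : nat) (i : 'I_n) : 'I_n :=
  Ordinal (leq_ltn_trans (leq0n i) (ltn_ord i)).

(* Q~^1 x = (d/g) x^1 + (1 - d/g) J_{g A1} x^1;
   Q~^i x = (d/g)(x^i - x^1) + Q~^1 x for i >= 2.
   Points of H^{N-1} are functions 'I_(N-1) -> H, index 0 being x^1. *)
Definition Qtilde1 (R : realType) (H : completeNormedModType R)
  (A1 : H -> set H) (delta gamma : R) (x1 : H) : H :=
  (delta / gamma) *: x1 + (1 - delta / gamma) *: resolvent gamma A1 x1.

Definition Qtilde (R : realType) (H : completeNormedModType R) (N : nat)
  (A1 : H -> set H) (delta gamma : R) (x : 'I_(N.-1) -> H) : 'I_(N.-1) -> H :=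
  fun i => let x1 := x (ord_first i) in
    if nat_of_ord i == 0%N then Qtilde1 A1 delta gamma x1
    else (delta / gamma) *: (x i - x1) + Qtilde1 A1 delta gamma x1.

Definition prodnorm (R : realType) (H : normedModType R) (n : nat)
  (x : 'I_n -> H) : R := Num.sqrt (\sum_(i < n) `|x i| ^+ 2).

Definition Lcheck (R : realType) (N : nat) (delta gamma : R) : R :=
  Num.sqrt delta / Num.sqrt gamma
  + Num.sqrt `|gamma - delta| / Num.sqrt gamma
    * Num.max (Num.sqrt (N%:R - 1)) (Num.sqrt (2 * N%:R) * Num.sqrt (delta / gamma)).

Arguments Qtilde {R H} N A1 delta gamma x i.
Arguments Lcheck {R} N delta gamma.

(* Main.v *)
Require Import Defs.
From HB Require Import structures.
From mathcomp Require Import all_boot all_order all_algebra.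
From mathcomp Require Import all_classical all_reals all_analysis.
From mathcomp Require Import ring lra.
Import Order.TTheory GRing.Theory Num.Theory.
Import numFieldNormedType.Exports.
Local Open Scope classical_set_scope.
Local Open Scope ring_scope.
Lemma ipC {R : realType} {H : normedModType R} {ip : H -> H -> R} :
  is_inner_product ip -> forall x y, ip x y = ip y x.
Proof. by case. Qed.

Lemma ip0l {R : realType} {H : normedModType R} {ip : H -> H -> R} :
  is_inner_product ip -> forall z, ip 0 z = 0.
Proof.
case=> _ lin _ z; have := lin 1 0 0 z; rewrite scale1r addr0 mul1r => h.
by apply: (addrI (ip 0 z)); rewrite addr0 -h.
Qed.

Lemma ipDl {R : realType} {H : normedModType R} {ip : H -> H -> R} :
  is_inner_product ip -> forall x y z, ip (x + y) z = ip x z + ip y z.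
Proof. by case=> _ lin _ x y z; have := lin 1 x y z; rewrite scale1r mul1r. Qed.

Lemma ipZl {R : realType} {H : normedModType R} {ip : H -> H -> R} :
  is_inner_product ip -> forall a x z, ip (a *: x) z = a * ip x z.
Proof.
move=> hip a x z; have := hip; case=> _ lin _.
by rewrite -[a *: x]addr0 lin ip0l // addr0.
Qed.

Lemma ipNl {R : realType} {H : normedModType R} {ip : H -> H -> R} :
  is_inner_product ip -> forall x z, ip (- x) z = - ip x z.
Proof. by move=> hip x z; rewrite -scaleN1r ipZl // mulN1r. Qed.

Lemma ipBl {R : realType} {H : normedModType R} {ip : H -> H -> R} :
  is_inner_product ip -> forall x y z, ip (x - y) z = ip x z - ip y z.
Proof. by move=> hip x y z; rewrite ipDl // ipNl. Qed.

Lemma ipDr {R : realType} {H : normedModType R} {ip : H -> H -> R} :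
  is_inner_product ip -> forall x y z, ip z (x + y) = ip z x + ip z y.
Proof. by move=> hip x y z; rewrite !(ipC hip z) ipDl. Qed.

Lemma ipZr {R : realType} {H : normedModType R} {ip : H -> H -> R} :
  is_inner_product ip -> forall a x z, ip z (a *: x) = a * ip z x.
Proof. by move=> hip a x z; rewrite !(ipC hip z) ipZl. Qed.

Lemma ipBr {R : realType} {H : normedModType R} {ip : H -> H -> R} :
  is_inner_product ip -> forall x y z, ip z (x - y) = ip z x - ip z y.
Proof. by move=> hip x y z; rewrite !(ipC hip z) ipBl. Qed.

Lemma ipxx {R : realType} {H : normedModType R} {ip : H -> H -> R} :
  is_inner_product ip -> forall x, `|x| ^+ 2 = ip x x.
Proof. by case. Qed.

Lemma normD2 {R : realType} {H : normedModType R} {ip : H -> H -> R} :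
  is_inner_product ip -> forall x y,
  `|x + y| ^+ 2 = `|x| ^+ 2 + 2 * ip x y + `|y| ^+ 2.
Proof.
move=> hip x y; rewrite !(ipxx hip) (ipDl hip x y) (ipDr hip x y x) (ipDr hip x y y).
rewrite (ipC hip y x); ring.
Qed.

Lemma ipNr {R : realType} {H : normedModType R} {ip : H -> H -> R} :
  is_inner_product ip -> forall x z, ip z (- x) = - ip z x.
Proof. by move=> hip x z; rewrite (ipC hip z (- x)) (ipNl hip) (ipC hip x z). Qed.

Lemma normB2 {R : realType} {H : normedModType R} {ip : H -> H -> R} :
  is_inner_product ip -> forall x y,
  `|x - y| ^+ 2 = `|x| ^+ 2 - 2 * ip x y + `|y| ^+ 2.
Proof.
move=> hip x y; rewrite (normD2 hip x (- y)) normrN (ipNr hip y x); ring.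
Qed.

Lemma ip_suml {R : realType} {H : normedModType R} {ip : H -> H -> R} :
  is_inner_product ip -> forall n (f : 'I_n -> H) z,
  ip (\sum_(i < n) f i) z = \sum_(i < n) ip (f i) z.
Proof.
move=> hip n f z.
apply: (big_morph (fun x => ip x z)); last exact: ip0l.
by move=> a b; rewrite (ipDl hip).
Qed.

Lemma ip_sumr {R : realType} {H : normedModType R} {ip : H -> H -> R} :
  is_inner_product ip -> forall n (f : 'I_n -> H) z,
  ip z (\sum_(i < n) f i) = \sum_(i < n) ip z (f i).
Proof.
move=> hip n f z; rewrite (ipC hip) (ip_suml hip); apply: eq_bigr => i _.
exact: ipC.
Qed.

Lemma var_id {R : realType} {H : normedModType R} {ip : H -> H -> R} :
  is_inner_product ip -> forall n (l : 'I_n -> R) (v : 'I_n -> H),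
  \sum_(i < n) l i = 1 ->
  \sum_(k < n) \sum_(j < n) l k * l j * `|v k - v j| ^+ 2 =
  2 * (\sum_(k < n) l k * `|v k| ^+ 2 - `|\sum_(k < n) l k *: v k| ^+ 2).
Proof.
move=> hip n l v l1.
set A := \sum_(k < n) l k * `|v k| ^+ 2.
have E1 : \sum_(k < n) \sum_(j < n) l k * l j * `|v k| ^+ 2 = A.
  apply: eq_bigr => k _.
  under eq_bigr do rewrite mulrAC.
  by rewrite -mulr_sumr l1 mulr1.
have E2 : \sum_(k < n) \sum_(j < n) l k * l j * `|v j| ^+ 2 = A.
  rewrite exchange_big /=; apply: eq_bigr => j _.
  under eq_bigr do rewrite (mulrC (l _)) mulrAC.
  by rewrite -mulr_sumr l1 mulr1.
have E3 : \sum_(k < n) \sum_(j < n) l k * l j * ip (v k) (v j)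
          = `|\sum_(k < n) l k *: v k| ^+ 2.
  rewrite (ipxx hip) (ip_suml hip); apply: eq_bigr => k _.
  rewrite (ip_sumr hip); apply: eq_bigr => j _.
  by rewrite (ipZl hip) (ipZr hip); ring.
rewrite (eq_bigr (fun k => \sum_(j < n) l k * l j * `|v k| ^+ 2
   + \sum_(j < n) l k * l j * `|v j| ^+ 2
   - 2 * \sum_(j < n) l k * l j * ip (v k) (v j))); last first.
  move=> k _; rewrite mulr_sumr -big_split -sumrB /=; apply: eq_bigr => j _.
  by rewrite (normB2 hip); ring.
by rewrite sumrB big_split /= -mulr_sumr E1 E2 E3; ring.
Qed.

Lemma normZZ2 {R : realType} {H : normedModType R} {ip : H -> H -> R} :
  is_inner_product ip -> forall (a b : R) u w,
  `|a *: u + b *: w| ^+ 2 = a ^+ 2 * `|u| ^+ 2 + 2 * a * b * ip u w + b ^+ 2 * `|w| ^+ 2.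
Proof.
move=> hip a b u w; rewrite (normD2 hip) (ipZl hip) (ipZr hip) !normrZ !exprMn.
rewrite !real_normK ?num_real //; ring.
Qed.

Definition cbar {R : realType} {H : normedModType R} {n} (l : 'I_n -> R) (c : 'I_n -> H) :=
  \sum_(k < n) l k *: c k.

Definition gfun {R : realType} {H : normedModType R} {n} (l : 'I_n -> R) (c s : 'I_n -> H) :=
  \sum_(k < n) l k * (`|c k| ^+ 2 - `|s k| ^+ 2) - `|cbar l c| ^+ 2.

Definition simplex {R : realType} {n} (l : 'I_n -> R) :=
  (forall k, 0 <= l k) /\ \sum_(k < n) l k = 1.

Lemma gfun_le0 {R : realType} {H : normedModType R} {ip : H -> H -> R} :
  is_inner_product ip -> forall n (c s : 'I_n -> H),
  (forall k j, `|c k - c j| <= `|s k - s j|) ->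
  forall l, simplex l -> gfun l c s <= 0.
Proof.
move=> hip n c s hcs l [l0 l1].
have hv := fun v => var_id hip n l v l1.
have hle : \sum_(k < n) \sum_(j < n) l k * l j * `|c k - c j| ^+ 2 <=
           \sum_(k < n) \sum_(j < n) l k * l j * `|s k - s j| ^+ 2.
  apply: ler_sum => k _; apply: ler_sum => j _.
  apply: ler_wpM2l; first by rewrite mulr_ge0.
  by rewrite lerXn2r ?nnegrE.
rewrite !hv in hle.
rewrite /gfun.
under eq_bigr do rewrite mulrBr.
rewrite sumrB /cbar.
have := sqr_ge0 `|\sum_(k < n) l k *: s k|.
lra.
Qed.

Lemma sum_bump {R : realType} {V : lmodType R} n (l : 'I_n -> R) (f : 'I_n -> V) k t :
  \sum_(j < n) ((1 - t) * l j + (if j == k then t else 0)) *: f j =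
  (1 - t) *: \sum_(j < n) l j *: f j + t *: f k.
Proof.
under eq_bigr do rewrite scalerDl -scalerA.
rewrite big_split /= -scaler_sumr; congr (_ + _).
rewrite (bigD1 k) //= eqxx big1 ?addr0 // => j /negbTE ->.
by rewrite scale0r.
Qed.

Lemma sum_bumpR {R : realType} n (l : 'I_n -> R) (f : 'I_n -> R) k t :
  \sum_(j < n) ((1 - t) * l j + (if j == k then t else 0)) * f j =
  (1 - t) * \sum_(j < n) l j * f j + t * f k.
Proof. exact: (@sum_bump R R^o). Qed.

Lemma gfun_bump {R : realType} {H : normedModType R} {ip : H -> H -> R} :
  is_inner_product ip -> forall n (c s : 'I_n -> H) l k t,
  \sum_(j < n) l j = 1 ->
  gfun (fun j => (1 - t) * l j + (if j == k then t else 0)) c s =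
  gfun l c s + t * ((`|cbar l c - c k| ^+ 2 - `|s k| ^+ 2) - gfun l c s)
   - t ^+ 2 * `|c k - cbar l c| ^+ 2.
Proof.
move=> hip n c s l k t l1.
rewrite /gfun sum_bumpR /cbar sum_bump (normZZ2 hip) !(normB2 hip).
rewrite (ipC hip (c k)); ring.
Qed.

Lemma simplex_bump {R : realType} n (l : 'I_n -> R) k t :
  simplex l -> 0 <= t <= 1 ->
  simplex (fun j => (1 - t) * l j + (if j == k then t else 0)).
Proof.
move=> [l0 l1] /andP[t0 t1]; split.
  move=> j; apply: addr_ge0; first by apply: mulr_ge0 => //; rewrite subr_ge0.
  by case: ifP.
have := @sum_bumpR R n l (fun=> 1) k t.
under eq_bigr do rewrite mulr1.
move=> ->; under eq_bigr do rewrite mulr1.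
by rewrite l1; ring.
Qed.

Lemma simplex_le1 {R : realType} n (l : 'I_n -> R) : simplex l -> forall j, l j <= 1.
Proof.
move=> [l0 l1] j; rewrite -l1 (bigD1 j) //= lerDl.
by apply: sumr_ge0 => i _.
Qed.

Lemma dist_cbar {R : realType} {H : normedModType R} n (c : 'I_n -> H) l k :
  simplex l -> `|c k - cbar l c| <= \sum_(j < n) `|c k - c j|.
Proof.
move=> hl; have [l0 l1] := hl.
have -> : c k - cbar l c = \sum_(j < n) l j *: (c k - c j).
  under eq_bigr do rewrite scalerBr.
  by rewrite sumrB -scaler_suml l1 scale1r.
apply: le_trans (ler_norm_sum _ _ _) _.
apply: ler_sum => j _; rewrite normrZ ger0_norm //.
by rewrite ler_piMl // simplex_le1.
Qed.

Lemma fin_kirsz {R : realType} {H : normedModType R} {ip : H -> H -> R} :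
  is_inner_product ip -> forall n (c s : 'I_n -> H), (0 < n)%N ->
  (forall k j, `|c k - c j| <= `|s k - s j|) ->
  forall e, 0 < e -> exists q, forall k, `|q - c k| ^+ 2 - `|s k| ^+ 2 <= e.
Proof.
move=> hip n c s n0 hcs.
suff main : forall e, 0 < e -> e <= 1 ->
    exists q, forall k, `|q - c k| ^+ 2 - `|s k| ^+ 2 <= e.
  move=> e e0; have m0 : 0 < Num.min e 1 by rewrite lt_min e0 ltr01.
  have m1 : Num.min e 1 <= 1 by rewrite ge_min lexx orbT.
  have [q hq] := main _ m0 m1.
  by exists q => k; apply: le_trans (hq k) _; rewrite ge_min lexx.
move=> e e0 e1.
set S := [set gfun l c s | l in [set l | simplex l]].
have hS : has_sup S.
  split.
    exists (gfun (fun j => if j == Ordinal n0 then 1 else 0) c s).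
    exists (fun j => if j == Ordinal n0 then 1 else 0) => //.
    split; first by move=> j; case: ifP.
    by rewrite (bigD1 (Ordinal n0)) //= ?eqxx big1 ?addr0 // => j /negbTE ->.
  by exists 0 => _ [l hl <-]; exact: (gfun_le0 hip _ _ _ hcs _ hl).
set D := \sum_(k < n) (\sum_(j < n) `|c k - c j|) ^+ 2 + 1.
have D1 : 1 <= D by rewrite lerDr sumr_ge0 // => k _; exact: sqr_ge0.
have D0 : 0 < D by apply: lt_le_trans D1.
have e'0 : 0 < e ^+ 2 / (4 * D) by rewrite divr_gt0 ?exprn_gt0 ?mulr_gt0.
have [_ [l hl <-] hgl] := sup_adherent e'0 hS.
exists (cbar l c) => k.
set t := e / (2 * D).
have t0 : 0 < t by rewrite divr_gt0 ?mulr_gt0.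
have t1 : t <= 1.
  rewrite /t ler_pdivrMr ?mulr_gt0 // mul1r.
  apply: le_trans e1 _; lra.
have ht : 0 <= t <= 1 by rewrite (ltW t0) t1.
have hl' := @simplex_bump R n l k t hl ht.
have hsup : gfun (fun j => (1 - t) * l j + (if j == k then t else 0)) c s <= sup S.
  by apply: sup_upper_bound => //; exists (fun j => (1 - t) * l j + (if j == k then t else 0)).
rewrite (gfun_bump hip) in hsup; last by case: hl.
have hg := gfun_le0 hip _ _ _ hcs _ hl.
have hB : `|c k - cbar l c| ^+ 2 <= D.
  apply: le_trans (_ : (\sum_(j < n) `|c k - c j|) ^+ 2 <= D).
    by rewrite lerXn2r ?nnegrE ?sumr_ge0 // dist_cbar.
  rewrite /D [X in _ <= X + 1](bigD1 k) //= -addrA lerDl addr_ge0 //.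
  by apply: sumr_ge0 => i _; exact: sqr_ge0.
set h := `|cbar l c - c k| ^+ 2 - `|s k| ^+ 2.
set g := gfun l c s.
set B := `|c k - cbar l c| ^+ 2.
have key : t * h < t * e.
  have E : e ^+ 2 / (4 * D) + t ^+ 2 * D = t * e.
    rewrite /t; field; lra.
  have : t ^+ 2 * B <= t ^+ 2 * D by rewrite ler_wpM2l // sqr_ge0.
  have : t * g <= 0 by rewrite pmulr_rle0.
  rewrite mulrBr in hsup.
  move: hsup hgl E; rewrite -/g -/h -/B.
  move: (t * h) (t * g) (t ^+ 2 * B) (t ^+ 2 * D) (e ^+ 2 / (4 * D)) (t * e) (sup S) => *.
  lra.
by rewrite -(ler_pM2l t0) ltW.
Qed.

Lemma archi1 (R : realType) (e : R) : 0 < e -> exists N, forall n, (N <= n)%N -> n.+1%:R^-1 < e.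
Proof.
move=> e0.
have [N _ hN] := near_infty_natSinv_lt (PosNum e0).
by exists N => n hn; apply: hN.
Qed.

Definition hz {R : realType} {H : normedModType R} (z : H * H) (q : H) : R :=
  `|q - z.1| ^+ 2 - `|z.2| ^+ 2.

Definition HF {R : realType} {H : normedModType R} (z0 : H * H) (F : seq (H * H)) (q : H) : R :=
  foldr (fun z acc => Num.max (hz z q) acc) (hz z0 q) F.

Lemma HF_ge {R : realType} {H : normedModType R} (z0 : H * H) F q z :
  z \in z0 :: F -> hz z q <= HF z0 F q.
Proof.
elim: F => [|w F IH] /= zin.
  by move: zin; rewrite inE => /eqP ->.
have [->|zw] := eqVneq z w; first by rewrite le_max lexx.
have zin' : z \in z0 :: F by move: zin; rewrite !inE (negbTE zw).
by rewrite le_max (IH zin') orbT.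
Qed.

Lemma HF_le {R : realType} {H : normedModType R} (z0 : H * H) F q e :
  (forall z, z \in z0 :: F -> hz z q <= e) -> HF z0 F q <= e.
Proof.
elim: F => [|w F IH] /= h.
  by apply: h; rewrite inE eqxx.
rewrite ge_max h ?inE ?eqxx ?orbT //=.
apply: IH => z; rewrite inE => /orP[/eqP->|zF]; apply: h; rewrite !inE ?eqxx ?zF ?orbT //.
Qed.

Lemma HF_sub {R : realType} {H : normedModType R} (z0 : H * H) F G q :
  {subset z0 :: F <= z0 :: G} -> HF z0 F q <= HF z0 G q.
Proof. by move=> sFG; apply: HF_le => z zF; apply: HF_ge; apply: sFG. Qed.

Lemma HF_lb {R : realType} {H : normedModType R} (z0 : H * H) F q :
  - `|z0.2| ^+ 2 <= HF z0 F q.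
Proof.
apply: le_trans _ (HF_ge z0 F q z0 (mem_head z0 F)).
by rewrite /hz; have := sqr_ge0 `|q - z0.1|; lra.
Qed.

Lemma hz_mid {R : realType} {H : normedModType R} {ip : H -> H -> R} :
  is_inner_product ip -> forall (z : H * H) (q r : H),
  hz z (2^-1 *: (q + r)) = (hz z q + hz z r) / 2 - `|q - r| ^+ 2 / 4.
Proof.
move=> hip z q r; rewrite /hz.
have h2 : (2^-1 + 2^-1 : R) = 1 by rewrite [in RHS](splitr 1) mul1r.
have -> : 2^-1 *: (q + r) - z.1 = 2^-1 *: (q - z.1) + 2^-1 *: (r - z.1).
  by rewrite !scalerBr addrACA -opprD -scalerDl h2 scale1r scalerDr.
have -> : q - r = (q - z.1) - (r - z.1) by rewrite opprB addrA subrK.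
rewrite (normZZ2 hip) (normB2 hip (q - z.1) (r - z.1)).
move: (`|q - z.1|) (`|r - z.1|) (`|z.2|) (ip (q - z.1) (r - z.1)) => a b c d.
by field.
Qed.

Lemma HF_mid {R : realType} {H : normedModType R} {ip : H -> H -> R} :
  is_inner_product ip -> forall (z0 : H * H) F (q r : H),
  HF z0 F (2^-1 *: (q + r)) <= (HF z0 F q + HF z0 F r) / 2 - `|q - r| ^+ 2 / 4.
Proof.
move=> hip z0 F q r; apply: HF_le => z zin.
rewrite (hz_mid hip).
have := HF_ge z0 F q z zin; have := HF_ge z0 F r z zin.
lra.
Qed.

Lemma HF_fin {R : realType} {H : normedModType R} {ip : H -> H -> R} :
  is_inner_product ip -> forall (P : set (H * H)),
  (forall z w, P z -> P w -> `|z.1 - w.1| <= `|z.2 - w.2|) ->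
  forall z0 F, P z0 -> (forall z, z \in F -> P z) ->
  forall e, 0 < e -> exists q, HF z0 F q <= e.
Proof.
move=> hip P hP z0 F Pz0 PF e e0.
set L := z0 :: F.
have PL : forall k, P (nth z0 L k).
  move=> k; case: (ltnP k (size L)) => hk; last by rewrite nth_default.
  have : nth z0 L k \in L by rewrite mem_nth.
  by rewrite inE => /orP[/eqP->|/PF].
have [q hq] := fin_kirsz hip (size L) (fun k => (nth z0 L k).1)
   (fun k => (nth z0 L k).2) (ltn0Sn _) (fun k j => hP _ _ (PL k) (PL j)) e e0.
exists q; apply: HF_le => z zin.
have hk : (index z L < size L)%N by rewrite index_mem.
by have := hq (Ordinal hk); rewrite /= nth_index.
Qed.

Definition V {R : realType} {H : normedModType R} (z0 : H * H) (F : seq (H * H)) : R :=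
  inf (range (HF z0 F)).

Lemma V_lb {R : realType} {H : normedModType R} (z0 : H * H) F :
  has_lbound (range (HF z0 F)).
Proof. by exists (- `|z0.2| ^+ 2) => _ [q _ <-]; exact: HF_lb. Qed.

Lemma V_le {R : realType} {H : normedModType R} (z0 : H * H) F q :
  V z0 F <= HF z0 F q.
Proof. by apply: ge_inf; [exact: V_lb | exists q]. Qed.

Lemma V_adh {R : realType} {H : normedModType R} (z0 : H * H) F (e : R) :
  0 < e -> exists q, HF z0 F q < V z0 F + e.
Proof.
move=> e0; have [_ [q _ <-] h] := inf_adherent e0 (conj (ex_intro _ _ (imageT (HF z0 F) 0)) (V_lb z0 F)).
by exists q.
Qed.

Lemma V_le0 {R : realType} {H : normedModType R} {ip : H -> H -> R} :
  is_inner_product ip -> forall (P : set (H * H)),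
  (forall z w, P z -> P w -> `|z.1 - w.1| <= `|z.2 - w.2|) ->
  forall z0 F, P z0 -> (forall z, z \in F -> P z) -> V z0 F <= 0.
Proof.
move=> hip P hP z0 F Pz0 PF; apply/ler_addgt0Pr => e e0; rewrite add0r.
have [q hq] := HF_fin hip P hP z0 F Pz0 PF e e0.
exact: le_trans (V_le _ _ q) hq.
Qed.

Lemma close_est {R : realType} {H : normedModType R} {ip : H -> H -> R} :
  is_inner_product ip -> forall (z0 : H * H) F G q r (e : R),
  {subset z0 :: F <= z0 :: G} ->
  HF z0 F q <= V z0 F + e -> HF z0 G r <= V z0 G + e ->
  `|q - r| ^+ 2 <= 2 * (V z0 G - V z0 F) + 4 * e.
Proof.
move=> hip z0 F G q r e sub hq hr.
have := HF_mid hip z0 F q r; have := V_le z0 F (2^-1 *: (q + r)).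
have := HF_sub z0 F G r sub.
lra.
Qed.

Lemma kirsz {R : realType} {H : completeNormedModType R} {ip : H -> H -> R} :
  is_inner_product ip -> forall (P : set (H * H)),
  (forall z w, P z -> P w -> `|z.1 - w.1| <= `|z.2 - w.2|) ->
  exists q, forall z, P z -> `|q - z.1| ^+ 2 <= `|z.2| ^+ 2.
Proof.
move=> hip P hP.
case: (pselect (exists z0, P z0)) => [[z0 Pz0]|nP]; last first.
  by exists 0 => z Pz; exfalso; apply: nP; exists z.
pose valid := fun F : seq (H * H) => forall z, z \in F -> P z.
set S := [set V z0 F | F in valid].
have hS : has_sup S.
  split; first by exists (V z0 [::]); exists [::].
  by exists 0 => _ [F vF <-]; exact: (V_le0 hip P hP z0 F Pz0 vF).
set M := sup S.
have VleM : forall F, valid F -> V z0 F <= M.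
  by move=> F vF; apply: sup_upper_bound => //; exists F.
have ex : forall n : nat, exists Fq : seq (H * H) * H, valid Fq.1 /\
    M - n.+1%:R^-1 < V z0 Fq.1 /\ HF z0 Fq.1 Fq.2 < V z0 Fq.1 + n.+1%:R^-1.
  move=> n; have en : 0 < n.+1%:R^-1 :> R by rewrite invr_gt0 ltr0n.
  have [_ [F vF <-] hF] := sup_adherent en hS.
  have [q hq] := V_adh z0 F _ en.
  by exists (F, q).
case: (choice ex) => f hf.
pose Fs := fun n => (f n).1; pose qs := fun n => (f n).2.
have vcat : forall F G, valid F -> valid G -> valid (F ++ G).
  by move=> F G vF vG z; rewrite mem_cat => /orP[/vF|/vG].
have subl : forall F G, {subset z0 :: F <= z0 :: (F ++ G)}.
  by move=> F G z; rewrite !inE mem_cat => /orP[->|->]; rewrite ?orbT.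
have subr : forall F G, {subset z0 :: G <= z0 :: (F ++ G)}.
  by move=> F G z; rewrite !inE mem_cat => /orP[->|->]; rewrite ?orbT.
have bound : forall n G r (e : R), valid G -> {subset z0 :: Fs n <= z0 :: G} ->
    n.+1%:R^-1 <= e -> HF z0 G r <= V z0 G + e -> `|qs n - r| ^+ 2 <= 6 * e.
  move=> n G r e vG sub ne hr.
  have [_ [h1 h2]] := hf n.
  have h2' : HF z0 (Fs n) (qs n) <= V z0 (Fs n) + e.
    by apply: le_trans (ltW h2) _; rewrite lerD2l.
  have := close_est hip z0 (Fs n) G (qs n) r e sub h2' hr.
  have := VleM G vG.
  have h1' : M - n.+1%:R^-1 < V z0 (Fs n) := h1.
  move: h1' ne; move: (V z0 G) (V z0 (Fs n)) (`|qs n - r| ^+ 2) (n.+1%:R^-1) => a b d i.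
  lra.
have cauchy_est : forall n m,
    `|qs n - qs m| ^+ 2 <= 24 * (n.+1%:R^-1 + m.+1%:R^-1).
  move=> n m.
  set e := n.+1%:R^-1 + m.+1%:R^-1.
  have en : (0:R) < n.+1%:R^-1 by rewrite invr_gt0 ltr0n.
  have em : (0:R) < m.+1%:R^-1 by rewrite invr_gt0 ltr0n.
  have e0 : 0 < e by rewrite addr_gt0.
  have [vn _] := hf n; have [vm _] := hf m.
  have [r hr] := V_adh z0 (Fs n ++ Fs m) _ e0.
  have ne : n.+1%:R^-1 <= e by rewrite lerDl ltW.
  have me : m.+1%:R^-1 <= e by rewrite lerDr ltW.
  have b1 := bound n _ r e (vcat _ _ vn vm) (subl _ _) ne (ltW hr).
  have b2 := bound m _ r e (vcat _ _ vn vm) (subr _ _) me (ltW hr).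
  have t := ler_distD r (qs n) (qs m).
  rewrite (distrC r (qs m)) in t.
  have hX : `|qs n - qs m| ^+ 2 <= (`|qs n - r| + `|qs m - r|) ^+ 2.
    by rewrite lerXn2r ?nnegrE ?addr_ge0.
  have := sqr_ge0 (`|qs n - r| - `|qs m - r|).
  move: hX b1 b2; rewrite -/e.
  move: (`|qs n - qs m|) (`|qs n - r|) (`|qs m - r|) => X a b.
  nra.
have cq : cvgn qs.
  apply: cauchy_cvg; apply: cauchy_exP => eps eps0.
  have eta0 : 0 < eps ^+ 2 / 48 by rewrite divr_gt0 ?exprn_gt0.
  have [N hN] := archi1 _ _ eta0.
  exists (qs N); exists N => // n hn /=.
  rewrite -ball_normE /ball_ /=.
  have := cauchy_est N n; have := hN N (leqnn N); have := hN n hn.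
  have X0 := normr_ge0 (qs N - qs n).
  move: (`|qs N - qs n|) X0 => X X0 h1 h2 h3.
  rewrite -(ltr_pXn2r (n := 2)) ?nnegrE ?(ltW eps0) //.
  move: h1 h2 h3; move: (eps ^+ 2) (N.+1%:R^-1) (n.+1%:R^-1) (X ^+ 2) => E a b Y.
  lra.
set q := limn qs.
have hq : qs @ \oo --> q := cq.
exists q => z Pz.
suff : hz z q <= 0 by rewrite /hz; move: (`|q - z.1| ^+ 2) (`|z.2| ^+ 2) => a b; lra.
apply/ler_addgt0Pr => eps eps0; rewrite add0r.
set K := `|q - z.1|.
have K0 : 0 <= K := normr_ge0 _.
set d0 := Num.min 1 (eps / (2 * (2 * K + 3))).
have d00 : 0 < d0 by rewrite lt_min ltr01 divr_gt0 // mulr_gt0 // ltr_wpDl // mulr_ge0.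
have d01 : d0 <= 1 by rewrite ge_min lexx.
have d0e : d0 * (2 * K + 3) <= eps / 2.
  have : d0 <= eps / (2 * (2 * K + 3)) by rewrite ge_min lexx orbT.
  have hK : 0 < 2 * K + 3 by rewrite ltr_wpDl // mulr_ge0.
  rewrite ler_pdivlMr ?mulr_gt0 //.
  move: hK; move: (2 * K + 3) => Q hQ.
  nra.
have hd2 : 0 < d0 / 2 by rewrite divr_gt0.
have [N1 _ hN1] := (cvgrPdist_lt _ _).1 hq _ hd2.
have et0 : 0 < Num.min (eps / 2) (d0 ^+ 2 / 24).
  by rewrite lt_min !divr_gt0 ?exprn_gt0.
have [N2 hN2] := archi1 _ _ et0.
set n := maxn N1 N2.
have hn1 : `|q - qs n| < d0 / 2 by apply: hN1; rewrite /= leq_maxl.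
have hn2 := hN2 n (leq_maxr N1 N2).
have [hn2a hn2b] : n.+1%:R^-1 < eps / 2 /\ n.+1%:R^-1 < d0 ^+ 2 / 24.
  by move: hn2; rewrite lt_min => /andP.
have en : (0:R) < n.+1%:R^-1 by rewrite invr_gt0 ltr0n.
have [vn _] := hf n.
have vG : valid (Fs n ++ [:: z]).
  by apply: vcat => // w; rewrite inE => /eqP->.
have [r hr] := V_adh z0 (Fs n ++ [:: z]) _ en.
have b := bound n _ r _ vG (subl _ _) (lexx _) (ltW hr).
have hzr : hz z r <= HF z0 (Fs n ++ [:: z]) r.
  by apply: HF_ge; rewrite !inE mem_cat inE eqxx !orbT.
have VG0 := V_le0 hip P hP z0 _ Pz0 vG.
have hqr : `|qs n - r| < d0 / 2.
  rewrite -(ltr_pXn2r (n := 2)) ?nnegrE ?(ltW hd2) //.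
  have -> : (d0 / 2) ^+ 2 = d0 ^+ 2 / 4 by field.
  move: b hn2b; move: (`|qs n - r| ^+ 2) (n.+1%:R^-1) (d0 ^+ 2) => Y a D.
  lra.
have hd : `|q - r| < d0.
  apply: le_lt_trans (ler_distD (qs n) q r) _.
  move: hn1 hqr; move: (`|q - qs n|) (`|qs n - r|) => a b'; lra.
have t1 : K <= `|q - r| + `|r - z.1| := ler_distD r q z.1.
have t2 : `|r - z.1| <= `|r - q| + K := ler_distD q r z.1.
rewrite (distrC r q) in t2.
rewrite /hz -/K.
move: hzr; rewrite /hz => hzr.
have d0' : 0 <= `|q - r| := normr_ge0 _.
have b0 : 0 <= `|r - z.1| := normr_ge0 _.
move: hzr hr VG0 hn2a t1 t2 hd d0' b0.
move: (`|q - r|) (`|r - z.1|) (`|z.2| ^+ 2) (HF z0 (Fs n ++ [:: z]) r) (V z0 (Fs n ++ [:: z])) (n.+1%:R^-1) => d bb c hf' vg i.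
move=> *.
nra.
Qed.

Ltac ipexp hip := repeat first [ rewrite (ipDl hip) | rewrite (ipBl hip) | rewrite (ipZl hip)
   | rewrite (ipNl hip) | rewrite (ipDr hip) | rewrite (ipBr hip) | rewrite (ipZr hip) | rewrite (ipNr hip) ].

Lemma mono_key {R : realType} {H : normedModType R} {ip : H -> H -> R} :
  is_inner_product ip -> forall (y v x q : H) (g : R), g != 0 ->
  ip (y - 2^-1 *: (q + x)) (v - g^-1 *: (x - 2^-1 *: (q + x))) =
  g^-1 / 4 * (`|y + g *: v - x| ^+ 2 - `|q - (y - g *: v)| ^+ 2).
Proof.
move=> hip y v x q g g0.
rewrite !(ipxx hip); ipexp hip.
rewrite ?(ipC hip v y) ?(ipC hip x y) ?(ipC hip q y) ?(ipC hip x v) ?(ipC hip q v) ?(ipC hip q x).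
by field.
Qed.

Lemma pair_key {R : realType} {H : normedModType R} {ip : H -> H -> R} :
  is_inner_product ip -> forall (y v y' v' x : H) (g : R),
  `|(y + g *: v - x) - (y' + g *: v' - x)| ^+ 2 - `|(y - g *: v) - (y' - g *: v')| ^+ 2
  = 4 * g * ip (y - y') (v - v').
Proof.
move=> hip y v y' v' x g.
rewrite !(ipxx hip); ipexp hip.
rewrite ?(ipC hip v y) ?(ipC hip y' y) ?(ipC hip v' y) ?(ipC hip y' v) ?(ipC hip v' v)
  ?(ipC hip v' y') ?(ipC hip x y) ?(ipC hip x v) ?(ipC hip x y') ?(ipC hip x v').
ring.
Qed.

Lemma resolvent_ex {R : realType} {H : completeNormedModType R} {ip : H -> H -> R}
  (A : H -> set H) (g : R) :
  is_inner_product ip -> maximally_monotone ip A -> 0 < g ->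
  forall x, exists p, exists2 u, A p u & x = p + g *: u.
Proof.
move=> hip [mA maxA] g0 x.
pose P := [set z : H * H | exists y v, A y v /\ z = (y - g *: v, y + g *: v - x)].
have hP : forall z w, P z -> P w -> `|z.1 - w.1| <= `|z.2 - w.2|.
  move=> _ _ [y [v [Ayv ->]]] [y' [v' [Ayv' ->]]] /=.
  rewrite -(ler_pXn2r (n := 2)) ?nnegrE //.
  rewrite -subr_ge0 (pair_key hip).
  by rewrite mulr_ge0 ?mulr_ge0 ?(ltW g0) // mA.
have [q hq] := kirsz hip P hP.
pose p := 2^-1 *: (q + x).
pose u := g^-1 *: (x - p).
have gn0 : g != 0 by rewrite gt_eqF.
have key : forall y v, A y v -> 0 <= ip (y - p) (v - u).
  move=> y v Ayv.
  rewrite /u /p (mono_key hip) //.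
  have := hq (y - g *: v, y + g *: v - x) (ex_intro _ y (ex_intro _ v (conj Ayv erefl))).
  rewrite /= -subr_ge0 => h.
  by rewrite mulr_ge0 // divr_ge0 // invr_ge0 ltW.
pose B := fun y v => A y v \/ (y = p /\ v = u).
have mB : monotone_op ip B.
  move=> y1 y2 v1 v2 [h1|[-> ->]] [h2|[-> ->]].
  - exact: mA.
  - exact: key.
  - rewrite -(opprB y2) -(opprB v2) (ipNl hip) (ipNr hip) opprK; exact: key.
  - by rewrite !subrr (ip0l hip).
have Apu : A p u := maxA B mB (fun y v h => or_introl h) p u (or_intror (conj erefl erefl)).
exists p; exists u => //.
by rewrite /u scalerA mulfV // scale1r addrC subrK.
Qed.

Lemma nonexp_core {R : realType} {H : normedModType R} {ip : H -> H -> R} :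
  is_inner_product ip -> forall (g : R) (p1 p2 u1 u2 : H), 0 <= g ->
  0 <= ip (p1 - p2) (u1 - u2) ->
  `|p1 - p2| <= `|(p1 + g *: u1) - (p2 + g *: u2)|.
Proof.
move=> hip g p1 p2 u1 u2 g0 m.
rewrite -(ler_pXn2r (n := 2)) ?nnegrE // -subr_ge0.
have -> : `|(p1 + g *: u1) - (p2 + g *: u2)| ^+ 2 - `|p1 - p2| ^+ 2 =
   2 * g * ip (p1 - p2) (u1 - u2) + g ^+ 2 * `|u1 - u2| ^+ 2.
  rewrite !(ipxx hip); ipexp hip.
  rewrite ?(ipC hip p2 p1) ?(ipC hip u1 p1) ?(ipC hip u2 p1) ?(ipC hip u1 p2)
    ?(ipC hip u2 p2) ?(ipC hip u2 u1).
  ring.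
by rewrite addr_ge0 // mulr_ge0 ?mulr_ge0 ?sqr_ge0.
Qed.

Lemma J_spec {R : realType} {H : completeNormedModType R} {ip : H -> H -> R}
  (A : H -> set H) (g : R) :
  is_inner_product ip -> maximally_monotone ip A -> 0 < g ->
  forall x, exists2 u, A (resolvent g A x) u & x = resolvent g A x + g *: u.
Proof.
move=> hip hA g0 x.
have [p [u Apu ex]] := resolvent_ex A g hip hA g0 x.
have : [set p | exists2 u, A p u & x = p + g *: u] (resolvent g A x).
  by apply: xgetPex; exists p; exists u.
by [].
Qed.

Lemma J_nonexp {R : realType} {H : completeNormedModType R} {ip : H -> H -> R}
  (A : H -> set H) (g : R) :
  is_inner_product ip -> maximally_monotone ip A -> 0 < g ->
  forall x y, `|resolvent g A x - resolvent g A y| <= `|x - y|.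
Proof.
move=> hip hA g0 x y.
have [u1 h1 e1] := J_spec A g hip hA g0 x.
have [u2 h2 e2] := J_spec A g hip hA g0 y.
move: (resolvent g A x) (resolvent g A y) e1 e2 h1 h2 => p1 p2 e1 e2 h1 h2.
rewrite e1 e2; apply: (nonexp_core hip) => //; first exact: ltW.
exact: hA.1.
Qed.

Lemma sum_bound {R : realType} m (ev : 'I_m -> R) (a b J r : R) :
  0 <= a -> 0 <= b -> 0 <= J -> 0 < r -> r ^+ 2 = m%:R ->
  J ^+ 2 <= \sum_(i < m) ev i ^+ 2 ->
  \sum_(i < m) (a * ev i + b * J) ^+ 2 <= (a + b * r) ^+ 2 * \sum_(i < m) ev i ^+ 2.
Proof.
move=> a0 b0 J0 r0 rm hJ.
have t : forall i, (a * ev i + b * J) ^+ 2 <=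
    (a ^+ 2 + a * b * r) * ev i ^+ 2 + (a * b / r + b ^+ 2) * J ^+ 2.
  move=> i; rewrite -subr_ge0.
  have -> : (a ^+ 2 + a * b * r) * ev i ^+ 2 + (a * b / r + b ^+ 2) * J ^+ 2
     - (a * ev i + b * J) ^+ 2 = a * b / r * (r * ev i - J) ^+ 2.
    by field; rewrite gt_eqF.
  by rewrite mulr_ge0 ?sqr_ge0 // divr_ge0 ?mulr_ge0 // ltW.
apply: le_trans (ler_sum _ (fun i _ => t i)) _.
rewrite big_split /= -mulr_sumr sumr_const card_ord -mulr_natl -rm.
set E := \sum_(i < m) ev i ^+ 2.
have -> : r ^+ 2 * ((a * b / r + b ^+ 2) * J ^+ 2) = (a * b * r + r ^+ 2 * b ^+ 2) * J ^+ 2.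
  by field; rewrite gt_eqF.
have hc : 0 <= a * b * r + r ^+ 2 * b ^+ 2.
  by rewrite addr_ge0 // ?mulr_ge0 ?sqr_ge0 // ltW.
have -> : (a + b * r) ^+ 2 * E = (a ^+ 2 + a * b * r) * E + (a * b * r + r ^+ 2 * b ^+ 2) * E.
  by ring.
by rewrite lerD2l ler_wpM2l.
Qed.

Lemma le_sqrt_self {R : realType} (t : R) : 0 <= t -> t <= 1 -> t <= Num.sqrt t.
Proof.
move=> t0 t1.
have s0 := sqrtr_ge0 t; have s2 := sqr_sqrtr t0.
have s1 : Num.sqrt t <= 1 by rewrite -sqrtr1 ler_sqrt.
rewrite -{1}s2 expr2 ler_piMl //.
Qed.

Lemma const_bound {R : realType} (a r S : R) : 0 <= a -> 0 <= r -> 0 <= S ->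
  S ^+ 2 = 2 * (r ^+ 2 + 1) ->
  a + `|1 - a| * r <= Num.sqrt a + Num.sqrt `|1 - a| * Num.max r (S * Num.sqrt a).
Proof.
move=> a0 r0 S0 hS.
have sa0 := sqrtr_ge0 a; have sa2 := sqr_sqrtr a0.
have sb0 := sqrtr_ge0 `|1 - a|; have sb2 := sqr_sqrtr (normr_ge0 (1 - a)).
case: (lerP a 1) => ha.
  have b0 : 0 <= 1 - a by rewrite subr_ge0.
  rewrite ger0_norm // in sb0 sb2 *.
  have h1 := le_sqrt_self a a0 ha.
  have h2 : 1 - a <= Num.sqrt (1 - a) by apply: le_sqrt_self => //; lra.
  have h3 : Num.sqrt (1 - a) * r <= Num.sqrt (1 - a) * Num.max r (S * Num.sqrt a).
    by rewrite ler_wpM2l // le_max lexx.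
  have h4 : (1 - a) * r <= Num.sqrt (1 - a) * r by rewrite ler_wpM2r.
  lra.
have b0 : 0 <= a - 1 by rewrite subr_ge0 ltW.
rewrite distrC ger0_norm // in sb0 sb2 *.
apply: (@le_trans _ _ (Num.sqrt a + Num.sqrt (a - 1) * (S * Num.sqrt a))); last first.
  by rewrite lerD2l ler_wpM2l // le_max lexx orbT.
rewrite -(ler_pXn2r (n := 2)) ?nnegrE ?addr_ge0 ?mulr_ge0 //.
move: sa0 sa2 sb0 sb2; move: (Num.sqrt a) (Num.sqrt (a - 1)) => sa sb sa0 sa2 sb0 sb2.
have e1 : (sa + sb * (S * sa)) ^+ 2 = a + 2 * a * (sb * S) + 2 * (r ^+ 2 + 1) * a * (a - 1).
  by rewrite -hS -sb2 -sa2; ring.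
rewrite e1.
have e2 : a + 2 * (r ^+ 2 + 1) * a * (a - 1) - (a + (a - 1) * r) ^+ 2
   = (a - 1) * (a * (r - 1) ^+ 2 + r ^+ 2) by ring.
have : 0 <= (a - 1) * (a * (r - 1) ^+ 2 + r ^+ 2).
  apply: mulr_ge0 => //; apply: addr_ge0; [apply: mulr_ge0 => //; exact: sqr_ge0 | exact: sqr_ge0].
have : 0 <= 2 * a * (sb * S) by rewrite !mulr_ge0.
move: e2; move: (2 * a * (sb * S)) ((a - 1) * (a * (r - 1) ^+ 2 + r ^+ 2))
  (2 * (r ^+ 2 + 1) * a * (a - 1)) ((a + (a - 1) * r) ^+ 2) => X Y Z W.
lra.
Qed.

Lemma vecid1 {V : zmodType} (u w s t : V) : (u - s) - (w - t) + (s - t) = u - w.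
Proof. by rewrite opprB addrAC -(addrA u) addKr -addrA addKr. Qed.

Lemma vecid2 {V : zmodType} (a b c d : V) : (a + b) - (c + d) = (a - c) + (b - d).
Proof. by rewrite opprD addrACA. Qed.

Lemma norm_comb {R : realType} {H : normedModType R} (a : R) (e j : H) :
  0 <= a -> `|a *: e + (1 - a) *: j| <= a * `|e| + `|1 - a| * `|j|.
Proof.
move=> a0; apply: le_trans (ler_normD _ _) _.
by rewrite !normrZ (ger0_norm a0).
Qed.

Theorem lemma5p3 (R : realType) (H : completeNormedModType R)
  (ip : H -> H -> R) (N : nat) (A1 : H -> set H) (delta gamma : R) :
  is_inner_product ip -> (2 <= N)%N -> maximally_monotone ip A1 ->
  0 < delta -> 0 < gamma ->
  forall x y : 'I_(N.-1) -> H,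
    prodnorm (fun i => Qtilde N A1 delta gamma x i - Qtilde N A1 delta gamma y i)
    <= Lcheck N delta gamma * prodnorm (fun i => x i - y i).
Proof.
move=> hip N2 hA d0 g0 x y.
set a := delta / gamma.
have a0 : 0 <= a by rewrite divr_ge0 // ltW.
have m0 : (0 < N.-1)%N by rewrite -subn1 subn_gt0.
pose i0 : 'I_(N.-1) := Ordinal m0.
have hof : forall i : 'I_(N.-1), ord_first i = i0 by move=> i; apply: val_inj.
set jd := resolvent gamma A1 (x i0) - resolvent gamma A1 (y i0).
have Q1d : Qtilde1 A1 delta gamma (x i0) - Qtilde1 A1 delta gamma (y i0)
    = a *: (x i0 - y i0) + (1 - a) *: jd.
  by rewrite /Qtilde1 -/a vecid2 -!scalerBr.
have Qd : forall i, Qtilde N A1 delta gamma x i - Qtilde N A1 delta gamma y i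
    = a *: (x i - y i) + (1 - a) *: jd.
  move=> i; rewrite /Qtilde !hof -/a.
  case: eqP => [iv|_].
    by have -> : i = i0 by apply: val_inj.
  by rewrite vecid2 Q1d -scalerBr addrA -scalerDr vecid1.
rewrite /prodnorm.
under eq_bigr => i _ do rewrite Qd.
set E := \sum_(i < N.-1) `|x i - y i| ^+ 2.
set b := `|1 - a|.
set J := `|jd|.
have Nr : (N.-1)%:R = N%:R - 1 :> R.
  by rewrite -[in RHS](prednK (ltnW N2)) mulrSr addrK.
set r := Num.sqrt (N%:R - 1 : R).
have r2 : r ^+ 2 = (N.-1)%:R.
  rewrite sqr_sqrtr; first exact: (esym Nr).
  by rewrite subr_ge0 ler1n ltnW.
have r0 : 0 < r by rewrite sqrtr_gt0 -Nr ltr0n.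
have JE : J ^+ 2 <= E.
  apply: (@le_trans _ _ (`|x i0 - y i0| ^+ 2)).
    rewrite lerXn2r ?nnegrE ?normr_ge0 //; exact: (J_nonexp A1 gamma hip hA g0).
  rewrite /E (bigD1 i0) //= lerDl.
  by apply: sumr_ge0 => i _; exact: sqr_ge0.
have stepA : \sum_(i < N.-1) `|a *: (x i - y i) + (1 - a) *: jd| ^+ 2
    <= \sum_(i < N.-1) (a * `|x i - y i| + b * J) ^+ 2.
  apply: ler_sum => i _; rewrite lerXn2r ?nnegrE ?normr_ge0 //.
    by apply: addr_ge0; apply: mulr_ge0 => //; exact: normr_ge0.
  exact: norm_comb.
have stepB := @sum_bound R _ (fun i => `|x i - y i|) a b J r a0 (normr_ge0 _) (normr_ge0 jd) r0 r2 JE.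
have stepC : Num.sqrt (\sum_(i < N.-1) `|a *: (x i - y i) + (1 - a) *: jd| ^+ 2)
    <= (a + b * r) * Num.sqrt E.
  have b0 : 0 <= b := normr_ge0 _.
  have abr : 0 <= a + b * r by rewrite addr_ge0 // mulr_ge0 // ltW.
  have -> : (a + b * r) * Num.sqrt E = Num.sqrt ((a + b * r) ^+ 2 * E).
    by rewrite sqrtrM ?sqr_ge0 // sqrtr_sqr ger0_norm.
  rewrite ler_sqrt; first exact: le_trans stepA stepB.
  by rewrite mulr_ge0 ?sqr_ge0 // sumr_ge0 // => i _; exact: sqr_ge0.
apply: le_trans stepC _.
apply: ler_wpM2r; first exact: sqrtr_ge0.
have ha : Num.sqrt delta / Num.sqrt gamma = Num.sqrt a.
  by rewrite /a sqrtrM ?sqrtrV // ltW.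
have hb : Num.sqrt `|gamma - delta| / Num.sqrt gamma = Num.sqrt b.
  have -> : b = `|gamma - delta| / gamma.
    rewrite /b /a.
    have -> : `|gamma - delta| / gamma = `|(gamma - delta) / gamma|.
      by rewrite normf_div (gtr0_norm g0).
    by rewrite mulrBl mulfV // gt_eqF.
  by rewrite sqrtrM ?sqrtrV // ltW.
rewrite /Lcheck ha hb -/a -/r.
apply: const_bound => //; first exact: ltW.
rewrite sqr_sqrtr ?mulr_ge0 ?ler0n // r2.
rewrite -[in LHS](prednK (ltnW N2)) mulrSr; ring.
Qed.
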